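(* For every $0<\alpha<1$ there exists $n_0$ such that the following holds. Let $G$ be a digraph on $n\ge n_0$ vertices with $\delta^0(G)\ge\alpha n$ and let $M$ be any matching in the complete graph on $V(G)$. Then there is a set $S\subseteq V(G)$ such that: (i) $n/3\le|S|\le 2n/3$; (ii) every $x\in V(G)$ satisfies $d^+_S(x),d^-_S(x),d^+_{\overline S}(x),d^-_{\overline S}(x)\ge\alpha n/6$, where $\overline S=V(G)\setminus S$; (iii) $S$ does not separate $M$.
   Context: $\delta^0(G)=\min\{\delta^+(G),\delta^-(G)\}$. For $S\subseteq V(G)$, $d^\pm_S(x)=|N^\pm_G(x)\cap S|$. A set $S$ separates a matching $M$ (in the complete graph on $V(G)$) if some edge of $M$ has exactly one endvertex in $S$. *)

(* Defs.v *)
From mathcomp Require Import all_boot all_order all_algebra.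
From mathcomp Require Import reals.
Set Implicit Arguments. Unset Strict Implicit. Unset Printing Implicit Defensive.

(* A digraph on a finite vertex type T is a loopless relation e : rel T;
   e x y means there is an arc x -> y. *)
Definition loopless (T : finType) (e : rel T) : Prop := forall x, ~~ e x x.

Definition outN (T : finType) (e : rel T) (x : T) : {set T} := [set y | e x y].
Definition inN (T : finType) (e : rel T) (x : T) : {set T} := [set y | e y x].
Definition doutS (T : finType) (e : rel T) (S : {set T}) (x : T) : nat := #|outN e x :&: S|.
Definition dinS (T : finType) (e : rel T) (S : {set T}) (x : T) : nat := #|inN e x :&: S|.

(* minimum semidegree delta^0 = min over x of min(d^+(x), d^-(x));
   the default #|T| is only used for the empty digraph *)
Definition min_semideg (T : finType) (e : rel T) : nat :=
  \big[minn/#|T|]_(x : T) minn #|outN e x| #|inN e x|.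

Definition is_matching (T : finType) (M : rel T) : Prop :=
  (forall x, ~~ M x x) /\ (forall x y, M x y = M y x) /\
  (forall x y z, M x y -> M x z -> y = z).

Definition separates (T : finType) (S : {set T}) (M : rel T) : Prop :=
  exists x y, [/\ M x y, x \in S & y \notin S].

(* Main.v *)
Require Import Defs.
From mathcomp Require Import all_boot all_order all_algebra.
From mathcomp Require Import reals.
From mathcomp Require Import ring lra.
Import Order.TTheory GRing.Theory Num.Theory.
Local Open Scope ring_scope.
Set Implicit Arguments. Unset Strict Implicit.

Section Mom.
Variables (R : realFieldType) (T : finType) (c : T -> R).
Definition sg (b : bool) : R := if b then 1 else -1.
Definition flip (a : T) (f : {ffun T -> bool}) : {ffun T -> bool} :=
  [ffun z => if z == a then ~~ f z else f z].
Lemma flipK a : involutive (flip a).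
Proof. move=> f; apply/ffunP => z; rewrite !ffunE; case: eqP => //; by rewrite negbK. Qed.

Lemma sum_odd a (g : {ffun T -> bool} -> R) :
  (forall f, g (flip a f) = g f) -> \sum_(f : {ffun T -> bool}) sg (f a) * g f = 0.
Proof.
move=> H; set S := (\sum_(f : {ffun T -> bool}) _).
have HS : S = - S.
  rewrite {1}/S (reindex_inj (can_inj (flipK a))) /= -sumrN.
  apply: eq_bigr => f _; rewrite ffunE eqxx H /sg; case: (f a) => /=; ring.
lra.
Qed.

Definition X (l : seq T) (f : {ffun T -> bool}) := \sum_(z <- l) c z * sg (f z).
Definition Q (l : seq T) := \sum_(z <- l) c z ^+ 2.
Definition N := \sum_(f : {ffun T -> bool}) (1 : R).

Lemma X_flip l a f : a \notin l -> X l (flip a f) = X l f.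
Proof.
move=> al; apply: eq_big_seq => z zl; rewrite ffunE; case: eqP => // za.
by rewrite -za zl in al.
Qed.

Lemma N_ge0 : 0 <= N.
Proof. by apply: sumr_ge0 => f _; rewrite ler01. Qed.

Lemma mom2 l : uniq l -> \sum_(f : {ffun T -> bool}) X l f ^+ 2 = N * Q l.
Proof.
elim: l => [|a l IH] /=.
  by move=> _; rewrite /Q big_nil mulr0; apply: big1 => f _; rewrite /X big_nil expr0n.
case/andP => al ul.
have E f : X (a :: l) f ^+ 2 = c a ^+ 2 * 1 + 2 * c a * (sg (f a) * X l f) + X l f ^+ 2.
  rewrite /X big_cons /sg; case: (f a); ring.
rewrite (eq_bigr _ (fun f _ => E f)) !big_split /= -!mulr_sumr.
rewrite sum_odd; last by move=> f; rewrite X_flip.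
rewrite IH // /Q big_cons -/(N) ; ring.
Qed.

Lemma mom4 l : uniq l -> \sum_(f : {ffun T -> bool}) X l f ^+ 4 <= 3 * N * Q l ^+ 2.
Proof.
elim: l => [|a l IH] /=.
  move=> _; rewrite /Q big_nil expr0n /= mulr0.
  by rewrite big1 // => f _; rewrite /X big_nil expr0n.
case/andP => al ul.
have E f : X (a :: l) f ^+ 4 = c a ^+ 4 * 1 + 4 * c a ^+ 3 * (sg (f a) * X l f)
   + 6 * c a ^+ 2 * X l f ^+ 2 + 4 * c a * (sg (f a) * X l f ^+ 3) + X l f ^+ 4.
  rewrite /X big_cons /sg; case: (f a); ring.
rewrite (eq_bigr _ (fun f _ => E f)) !big_split /= -!mulr_sumr.
rewrite !sum_odd; try by move=> f; rewrite X_flip.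
rewrite mom2 // -/(N).
have := IH ul; have := N_ge0.
rewrite /Q big_cons -/(Q l).
have : 0 <= Q l by apply: sumr_ge0 => z _; apply: sqr_ge0.
have : 0 <= c a ^+ 2 by apply: sqr_ge0.
set q := Q l; set M := \sum_(f : {ffun T -> bool}) _; set n := N; set u := c a.
have -> : u ^+ 4 = u ^+ 2 * u ^+ 2 by ring.
set v := u ^+ 2.
move=> hv hq hn hM. nra.
Qed.
End Mom.

Unset Implicit Arguments.

Section Comb.
Variables (T : finType) (M : rel T).
Hypothesis HM : is_matching M.

Definition rep (x : T) : T :=
  if [pick y | M x y] is Some y then (if (enum_rank y < enum_rank x)%N then y else x) else x.

Lemma rep_cases x : rep x = x \/ M x (rep x).
Proof.
rewrite /rep; case: pickP => [y Hy|_]; last by left.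
by case: ifP => _; [right|left].
Qed.

Lemma rep_eq x y : M x y -> rep x = rep y.
Proof.
case: HM => irr [sym uni] Hxy.
rewrite /rep; case: pickP => [x' Hx'|H]; last by have := H y; rewrite /= Hxy.
have -> := uni _ _ _ Hx' Hxy.
case: pickP => [y' Hy'|H]; last by have := H x; rewrite /= sym Hxy.
rewrite sym in Hxy; have -> := uni _ _ _ Hy' Hxy.
case: (ltngtP (enum_rank y) (enum_rank x)) => //.
by move/val_inj/enum_rank_inj => ->.
Qed.

Lemma fiber_le2 z : (#|[set y | rep y == z]| <= 2)%N.
Proof.
case: HM => irr [sym uni].
have sub : [set y | rep y == z] \subset z |: [set y | M z y].
  apply/subsetP => y; rewrite !inE => /eqP <-.
  case: (rep_cases y) => [->|h]; first by rewrite eqxx.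
  by rewrite sym h orbT.
apply: leq_trans (subset_leq_card sub) _.
rewrite cardsU1 (_ : 2 = 1 + 1)%N //; apply: leq_add; first by case: (_ \in _).
apply/card_le1_eqP => u v; rewrite !inE => hu hv; by have -> := uni _ _ _ hu hv.
Qed.

Variable R : realType.

Definition cw (A : {set T}) (z : T) : R := (#|[set y in A | rep y == z]|)%:R.

Lemma X_rep (A : {set T}) (f : {ffun T -> bool}) :
  \sum_(y in A) sg R (f (rep y)) = X (cw A) (index_enum T) f.
Proof.
rewrite (partition_big rep xpredT) //= /X.
apply: eq_big => [//|z _].
rewrite (eq_bigr (fun _ => sg R (f z))); last by move=> y /andP [_ /eqP ->].
rewrite (eq_bigl (fun y => y \in [set y in A | rep y == z])); last by move=> y; rewrite !inE.
by rewrite sumr_const /cw mulr_natl.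
Qed.

Lemma cw_sum (A : {set T}) : \sum_z cw A z = (#|A|)%:R.
Proof.
rewrite /cw -natr_sum; congr (_%:R).
rewrite -[#|A|]sum1_card [RHS](partition_big rep xpredT) //=.
apply: eq_big => [//|z _]; rewrite -sum1_card; apply: eq_bigl => y; by rewrite !inE.
Qed.

Lemma Q_le (A : {set T}) : Q (cw A) (index_enum T) <= 2 * (#|T|)%:R.
Proof.
rewrite /Q.
apply: le_trans (_ : \sum_z 2 * cw A z <= _).
  apply: ler_sum => z _.
  have h0 : 0 <= cw A z by rewrite /cw ler0n.
  have h2 : cw A z <= 2.
    rewrite /cw ler_nat.
    apply: leq_trans (fiber_le2 z); apply: subset_leq_card.
    by apply/subsetP => y; rewrite !inE => /andP [].
  nra.
rewrite -mulr_sumr cw_sum ler_wpM2l // ler_nat; exact: max_card.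
Qed.

Lemma mom4A (A : {set T}) : \sum_(f : {ffun T -> bool}) (\sum_(y in A) sg R (f (rep y))) ^+ 4
   <= 12 * N R T * (#|T|)%:R ^+ 2.
Proof.
under eq_bigr do rewrite X_rep.
apply: le_trans (mom4 _ (index_enum_uniq T)) _.
have hq := Q_le A.
have hq0 : 0 <= Q (cw A) (index_enum T) by apply: sumr_ge0 => z _; apply: sqr_ge0.
have hN := N_ge0 R T.
set q := Q _ _ in hq hq0 *; set n := (#|T|)%:R in hq *.
have : q ^+ 2 <= 4 * n ^+ 2 by nra.
nra.
Qed.

Lemma card_sg (A : {set T}) (P : pred T) :
  (#|A :&: [set y | P y]|)%:R * 2 = (#|A|)%:R + \sum_(y in A) sg R (P y) :> R.
Proof.
rewrite -!sum1_card !natr_sum.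
rewrite (eq_bigl (fun y => (y \in A) && P y)); last by move=> y; rewrite !inE.
rewrite big_mkcond /= [X in _ = X + _]big_mkcond /= [X in _ = _ + X]big_mkcond /= -big_split /= mulr_suml.
apply: eq_bigr => y _; case: (y \in A) => //=; [rewrite /sg; case: (P y) => /=; ring | ring].
Qed.

End Comb.

Set Implicit Arguments. Unset Strict Implicit.

Lemma pow4_ge1 (R : realType) (D y : R) : 0 < D -> D < `|y| -> 1 <= y ^+ 4 / D ^+ 4.
Proof.
move=> D0 Dy.
rewrite ler_pdivlMr ?exprn_gt0 // mul1r.
have -> : y ^+ 4 = `|y| ^+ 4 by rewrite -normrX ger0_norm // exprn_even_ge0.
apply: lerXn2r; rewrite ?nnegrE ?ltW //; exact: lt_trans Dy.
Qed.

Lemma pow4_ge0 (R : realType) (D y : R) : 0 < D -> 0 <= y ^+ 4 / D ^+ 4.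
Proof. by move=> D0; rewrite divr_ge0 ?exprn_even_ge0 // ltW // exprn_gt0. Qed.

Lemma semideg_le (T : finType) (e : rel T) x :
  (min_semideg e <= minn #|outN e x| #|inN e x|)%N.
Proof.
rewrite /min_semideg.
elim: (index_enum T) (mem_index_enum x) => [//|y s IH].
rewrite in_cons big_cons; case/orP => [/eqP ->|/IH h]; first exact: geq_minl.
exact: leq_trans (geq_minr _ _) h.
Qed.

Lemma sg_neg (R : realType) b : sg R (~~ b) = - sg R b.
Proof. by case: b; rewrite /sg /= ?opprK. Qed.

Unset Implicit Arguments.
Theorem lemma3p5 (R : realType) (alpha : R) :
  0 < alpha < 1 ->
  exists n0 : nat,
  forall (T : finType) (e : rel T) (M : rel T),
    (n0 <= #|T|)%N ->
    loopless e ->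
    alpha * #|T|%:R <= (min_semideg e)%:R ->
    is_matching M ->
    exists S : {set T},
      [/\ #|T|%:R / 3 <= #|S|%:R :> R, #|S|%:R <= 2 * #|T|%:R / 3 :> R,
          (forall x : T,
             [/\ alpha * #|T|%:R / 6 <= (doutS e S x)%:R,
                 alpha * #|T|%:R / 6 <= (dinS e S x)%:R,
                 alpha * #|T|%:R / 6 <= (doutS e (~: S) x)%:R &
                 alpha * #|T|%:R / 6 <= (dinS e (~: S) x)%:R])
        & ~ separates S M].
Proof.
case/andP => a0 a1.
set K := 1100 / alpha ^+ 4.
have := truncnS_gt K; set m := (_ .+1)%N => Km.
exists m => T e M hn _ hdeg hM.
set nR := (#|T|)%:R : R.
have Kn : K < nR by apply: lt_le_trans Km _; rewrite ler_nat.
have t0 : 0 < alpha ^+ 4 by rewrite exprn_gt0.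
have t1 : alpha ^+ 4 < 1 by rewrite exprn_ilt1 // ltW.
have tn : 1100 < alpha ^+ 4 * nR.
  by move: Kn; rewrite /K ltr_pdivrMr // mulrC.
have n1100 : 1100 < nR by nra.
have dge x : alpha * nR <= (#|outN e x|)%:R /\ alpha * nR <= (#|inN e x|)%:R.
  have h := semideg_le e x.
  split; apply: le_trans hdeg _; rewrite ler_nat; apply: leq_trans h _;
    [exact: geq_minl | exact: geq_minr].
set D := 2 * alpha * nR / 3.
set E := nR / 3.
have D0 : 0 < D by rewrite /D; apply: divr_gt0 => //; nra.
have E0 : 0 < E by rewrite /E; apply: divr_gt0 => //; lra.
pose Y (A : {set T}) (f : {ffun T -> bool}) := \sum_(y in A) sg R (f (rep T M y)).
pose good f := (`|Y [set: T] f| <= E) &&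
   [forall x, (`|Y (outN e x) f| <= D) && (`|Y (inN e x) f| <= D)].
have [f /andP [gs /forallP gd]] : exists f, good f.
  case: (boolP [exists f, good f]) => [/existsP //|]; rewrite negb_exists => /forallP Hb.
  exfalso.
  pose F f := Y [set: T] f ^+ 4 / E ^+ 4 +
     \sum_x (Y (outN e x) f ^+ 4 / D ^+ 4 + Y (inN e x) f ^+ 4 / D ^+ 4).
  have F0 f : 1 <= F f.
    have := Hb f; rewrite /good negb_and => /orP [h|].
      rewrite /F -[1]addr0; apply: lerD; first by apply: pow4_ge1; rewrite // ltNge.
      by apply: sumr_ge0 => x _; apply: addr_ge0; apply: pow4_ge0.
    rewrite negb_forall => /existsP [x]; rewrite negb_and => hx.
    rewrite /F -[1]add0r; apply: lerD; first by apply: pow4_ge0.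
    rewrite (bigD1 x) //= -[1]addr0; apply: lerD; last first.
      by apply: sumr_ge0 => z _; apply: addr_ge0; apply: pow4_ge0.
    case/orP: hx => h.
      rewrite -[1]addr0; apply: lerD; [by apply: pow4_ge1; rewrite // ltNge | exact: pow4_ge0].
    rewrite -[1]add0r; apply: lerD; [exact: pow4_ge0 | by apply: pow4_ge1; rewrite // ltNge].
  have N1 : 1 <= N R T.
    rewrite /N (bigD1 [ffun=> true]) //= lerDl.
    by apply: sumr_ge0 => g _; rewrite ler01.
  have hsum : N R T <= \sum_(f : {ffun T -> bool}) F f by apply: ler_sum => f _; exact: F0.
  have bnd (A : {set T}) (c : R) : 0 < c ->
      \sum_(f : {ffun T -> bool}) Y A f ^+ 4 / c ^+ 4 <= 12 * N R T * nR ^+ 2 / c ^+ 4.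
    move=> c0; rewrite -mulr_suml; apply: ler_wpM2r; first by rewrite invr_ge0 exprn_ge0 // ltW.
    exact: mom4A.
  move: hsum; rewrite /F big_split /= exchange_big /=.
  under [X in _ <= _ + X]eq_bigr do rewrite big_split /=.
  move=> hsum.
  have h2 : \sum_x (\sum_(f : {ffun T -> bool}) Y (outN e x) f ^+ 4 / D ^+ 4 +
                     \sum_(f : {ffun T -> bool}) Y (inN e x) f ^+ 4 / D ^+ 4)
            <= \sum_(x : T) (2 * (12 * N R T * nR ^+ 2 / D ^+ 4)).
    apply: ler_sum => x _; apply: le_trans (lerD (bnd (outN e x) D D0) (bnd (inN e x) D D0)) _; rewrite le_eqVlt; apply/orP; left; apply/eqP; ring.
  rewrite sumr_const -/nR in h2.
  have h1 := bnd [set: T] E E0.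
  have hA : 12 * nR ^+ 2 / E ^+ 4 < 1 / 2.
    rewrite ltr_pdivrMr ?exprn_gt0 // /E.
    have -> : (nR / 3) ^+ 4 = nR ^+ 2 * nR ^+ 2 / 81 by field.
    have : 2000 < nR ^+ 2 by nra.
    set p := nR ^+ 2 => hp. nra.
  have hB : nR * (2 * (12 * nR ^+ 2 / D ^+ 4)) < 1 / 2.
    have -> : nR * (2 * (12 * nR ^+ 2 / D ^+ 4)) = 24 * nR ^+ 3 / D ^+ 4 by field; lra.
    rewrite ltr_pdivrMr ?exprn_gt0 // /D.
    have -> : (2 * alpha * nR / 3) ^+ 4 = 16 / 81 * (alpha ^+ 4 * nR) * nR ^+ 3 by field.
    have : 0 < nR ^+ 3 by rewrite exprn_gt0 //; lra.
    nra.
  have e1 : 12 * N R T * nR ^+ 2 / E ^+ 4 = N R T * (12 * nR ^+ 2 / E ^+ 4) by ring.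
  have e2 : (2 * (12 * N R T * nR ^+ 2 / D ^+ 4)) *+ #|T| =
            N R T * (nR * (2 * (12 * nR ^+ 2 / D ^+ 4))).
    by rewrite -mulr_natl -/nR; ring.
  rewrite e1 in h1; rewrite e2 in h2.
  set a := 12 * nR ^+ 2 / E ^+ 4 in h1 hA.
  set b := nR * _ in h2 hB.
  set N0 := N R T in N1 hsum h1 h2.
  have : N0 <= N0 * a + N0 * b by apply: le_trans hsum _; apply: lerD.
  nra.
pose P := fun y => f (rep T M y).
have setCP : ~: [set y | P y] = [set y | ~~ P y] by apply/setP => y; rewrite !inE.
have negY (A : {set T}) : \sum_(y in A) sg R (~~ P y) = - Y A f.
  by rewrite -sumrN; apply: eq_bigr => y _; rewrite sg_neg.
exists [set y | P y]; split.
- have hs := card_sg T R [set: T] P; rewrite setTI cardsT -/nR in hs.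
  move: gs; rewrite ler_norml => /andP [g1 g2].
  rewrite /E in g1 g2 *; change (\sum_(y in [set: T]) sg R (P y)) with (Y [set: T] f) in hs. lra.
- have hs := card_sg T R [set: T] P; rewrite setTI cardsT -/nR in hs.
  move: gs; rewrite ler_norml => /andP [g1 g2].
  rewrite /E in g1 g2 *; change (\sum_(y in [set: T]) sg R (P y)) with (Y [set: T] f) in hs. lra.
- move=> x; have [o i] := dge x; have /andP [go gi] := gd x.
  move: go gi; rewrite !ler_norml /D => /andP [go1 go2] /andP [gi1 gi2].
  have h1 := card_sg T R (outN e x) P.
  have h2 := card_sg T R (inN e x) P.
  have h3 := card_sg T R (outN e x) (fun y => ~~ P y).
  have h4 := card_sg T R (inN e x) (fun y => ~~ P y).
  rewrite negY in h3; rewrite negY in h4.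
  change (\sum_(y in outN e x) sg R (P y)) with (Y (outN e x) f) in h1.
  change (\sum_(y in inN e x) sg R (P y)) with (Y (inN e x) f) in h2.
  rewrite /doutS /dinS setCP.
  split; lra.
- move=> [u [v [huv hu hv]]]; rewrite !inE /P in hu hv.
  by move: hu; rewrite (@rep_eq T M hM u v huv) => hu; rewrite hu in hv.
Qed.
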